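(* Let $G$ be a composite graph on $n$ nodes with skeleton $\widehat G$ on $m$ nodes, whose components $G_1,\dots,G_m$ are all cliques (of arbitrary sizes). Let $d^{in}_{\max}(G)$ be the maximum in-degree of the nodes of $G$. If $$d^{in}_{\max}(G)\le n-\frac{m+1}{2},$$ then $G$ is not a stable motif (for any CTLN $W(G,\varepsilon,\delta)$ with legal parameters). In particular, if $\widehat G$ has maximum in-degree $d^{in}_{\max}(\widehat G)<\frac m2$, then $G$ is not a stable motif.
   Context: Composite graph: given graphs $G_1,\dots,G_m$ (nonempty) and a simple directed graph $\widehat G$ on $[m]$, the composite graph with components $G_i$ and skeleton $\widehat G$ is the union of the $G_i$ (with their internal edges) plus, for $u\in G_i$, $v\in G_j$, $i\ne j$, an edge $u\to v$ iff $i\to j$ in $\widehat G$. A clique is a graph with all pairs bidirectionally connected. For a simple directed graph $H$ on $[h]$ and legal parameters ($\delta>0$, $0<\varepsilon<\frac{\delta}{\delta+1}$), the CTLN $W=W(H,\varepsilon,\delta)$ has $W_{ii}=0$, $W_{ij}=-1+\varepsilon$ if $j\to i$, $W_{ij}=-1-\delta$ if $i\ne j$, $j\not\to i$ (dynamics $\dot x_i=-x_i+[\sum_jW_{ij}x_j+\theta]_+$, $\theta>0$; assumed nondegenerate). $H$ is a stable motif if $\theta(I-W)^{-1}1$ has all entries positive and all eigenvalues of $I-W$ have positive real part. *)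

(* Defs.v *)
(* R is an arbitrary real closed field (e.g. the reals),
   eigenvalues are taken in its algebraic closure R[i] (mathcomp-real-closed). *)
From HB Require Import structures.
From mathcomp Require Import all_boot all_order all_algebra.
From mathcomp Require Import complex.
Set Implicit Arguments. Unset Strict Implicit. Unset Printing Implicit Defensive.
Import Order.TTheory GRing.Theory Num.Theory.
Local Open Scope ring_scope.

(* A directed graph on a finite vertex type is a relation; [G u v] means u -> v. *)

Definition simple_digraph (T : finType) (G : rel T) : Prop := forall v, ~~ G v v.

(* Composite graph on [n] nodes whose m components are all cliques:
   [c v] is the index of the component containing v (c surjective = components
   nonempty); inside a component all distinct pairs are (bidirectionally)
   connected; between components u -> v iff (c u) -> (c v) in the skeleton. *)
Definition composite_clique_graph (n m : nat) (c : 'I_n -> 'I_m) (Gh : rel 'I_m)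
  : rel 'I_n :=
  fun u v => (u != v) && ((c u == c v) || Gh (c u) (c v)).

Definition indeg (T : finType) (G : rel T) (v : T) : nat := #|[set u | G u v]|.
Definition max_indeg (T : finType) (G : rel T) : nat := (\max_(v : T) indeg G v)%N.

Definition legal_params (R : realFieldType) (eps delta : R) : Prop :=
  0 < delta /\ 0 < eps /\ eps < delta / (delta + 1).

Definition ctln (R : pzRingType) (n : nat) (H : rel 'I_n) (eps delta : R) : 'M[R]_n :=
  \matrix_(i, j) (if i == j then 0
                  else if H j i then -1 + eps else -1 - delta).

Definition stable_motif (R : rcfType) (n : nat) (H : rel 'I_n)
    (eps delta theta : R) : Prop :=
  let A := 1%:M - ctln H eps delta in
  [/\ A \in unitmx,
      forall i : 'I_n, 0 < (theta *: (invmx A *m (const_mx 1 : 'cV[R]_n))) i ord0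
    & forall lam : R[i],
        eigenvalue (map_mx (real_complex R) A) lam -> 0 < complex.Re lam].

(* Main.v *)
Require Import Defs.
From HB Require Import structures.
From mathcomp Require Import all_boot all_order all_algebra.
From mathcomp Require Import complex.
From mathcomp Require Import polyrcf.
From mathcomp Require Import lra.
From mathcomp Require Import zify.
From Stdlib Require Import Lia.
From Stdlib Require Import Classical.
Import Order.TTheory GRing.Theory Num.Theory.
Local Open Scope ring_scope.

Lemma sum_pos_seq (R : realDomainType) (T : eqType) (s : seq T) (F : T -> R) :
  s != [::] -> (forall z, z \in s -> 0 < F z) -> 0 < \sum_(z <- s) F z.
Proof.
case: s => [//|z s] _ H; rewrite big_cons.
apply: ltr_wpDr; last by apply: H; rewrite mem_head.
by rewrite big_seq; apply: sumr_ge0 => x xs; apply/ltW/H; rewrite in_cons xs orbT.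
Qed.

Lemma trace_root (R : rcfType) k (M : 'M[R]_k.+2) (t : R) :
  root (char_poly M) t ->
  (forall lam : R[i], eigenvalue (map_mx (real_complex R) M) lam -> 0 < complex.Re lam) ->
  t < \tr M.
Proof.
move=> rt Hst.
set phi := real_complex R.
set Mc := map_mx phi M.
have Hpc : map_poly phi (char_poly M) = char_poly Mc by rewrite map_char_poly.
have [rs Drs] := closed_field_poly_normal (char_poly Mc).
rewrite (eqP (char_poly_monic Mc)) scale1r in Drs.
have Hsz : size rs = k.+2.
  have := size_char_poly Mc; rewrite Drs size_prod_XsubC; by case.
have Htr : \sum_(z <- rs) z = phi (\tr M).
  have H1 := char_poly_trace Mc (ltn0Sn _).
  have := @coefPn_prod_XsubC _ rs; rewrite Hsz -Drs H1 => /(_ isT) /oppr_inj <-.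
  rewrite /Mc /phi /mxtrace rmorph_sum; apply: eq_bigr => i _; by rewrite mxE.
have troot : phi t \in rs.
  by rewrite -root_prod_XsubC -Drs -Hpc; apply: rmorph_root.
have Hpos : forall z, z \in rs -> 0 < complex.Re z.
  move=> z zs; apply: Hst; rewrite eigenvalue_root_char Drs root_prod_XsubC //.
have Hsum : \sum_(z <- rs) z = phi t + \sum_(z <- rem (phi t) rs) z.
  by rewrite (perm_big _ (perm_to_rem troot)) big_cons.
have HRe : complex.Re (\sum_(z <- rs) z) = \tr M.
  by rewrite Htr.
rewrite -HRe Hsum raddfD /= -ltrBlDl subrr raddf_sum.
apply: sum_pos_seq.
  by rewrite -size_eq0 size_rem // Hsz.
by move=> z /mem_rem; apply: Hpos.
Qed.
Lemma eigen_transfer (F : fieldType) n m (U : 'M[F]_(n, m)) (V : 'M[F]_(m, n)) (e lam : F) :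
  eigenvalue (V *m U + e%:M) lam -> lam != e -> eigenvalue (e%:M + U *m V) lam.
Proof.
move=> /eigenvalueP [w Hw w0] le.
have HVU : w *m V *m U = (lam - e) *: w.
  by rewrite scalerBl -Hw mulmxDr mul_mx_scalar addrK mulmxA.
apply/eigenvalueP; exists (w *m V).
  rewrite mulmxDr mul_mx_scalar mulmxA HVU.
  by rewrite -scalemxAl -scalerDl addrC subrK.
apply: contraNneq w0 => H.
move: HVU; rewrite H mul0mx => /esym /eqP; rewrite scaler_eq0 subr_eq0 (negPf le) /=.
by [].
Qed.
Lemma PF (R : rcfType) k (P : 'M[R]_k.+1) (r : R) :
  0 < r -> (forall i j, 0 <= P i j) -> (forall i, r <= \sum_j P i j) ->
  exists2 t, r <= t & root (char_poly P) t.
Proof.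
move=> r0 P0 Pr.
set p := char_poly P.
case: (classic (exists2 t, r <= t & root p t)) => // Hno.
have Hno' : forall t, r <= t -> ~~ root p t.
  by move=> t rt; apply/negP => Ht; apply: Hno; exists t.
pose s := p.[r].
have Hsp : forall t, r <= t -> 0 < s * p.[t].
  move=> t rt; rewrite ltNge; apply/negP => H.
  have [x /andP [] ] := polyrcf.poly_ivt rt H.
  by rewrite /= => rx _; apply/negP; apply: Hno'.
pose Q := char_poly_mx P.
pose g := \adj Q *m (const_mx 1 : 'cV[{poly R}]_k.+1).
pose hp i := s *: g i ord0.
pose hv t i := (hp i).[t].
have Hid : forall t i, t * hv t i - \sum_j P i j * hv t j = s * p.[t].
  move=> t i.
  have E : Q *m g = p *: const_mx 1.
    by rewrite /g mulmxA mul_mx_adj mul_scalar_mx.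
  have := congr1 (fun M => (map_mx (horner_eval t) M) i ord0) E.
  rewrite map_mxM !mxE /=.
  rewrite mulr1 /= => H.
  have H' : \sum_j (t * (i == j)%:R - P i j) * (g j ord0).[t] = p.[t].
    rewrite -[RHS]/(horner_eval t p) -H; apply: eq_bigr => j _.
    rewrite !mxE /horner_eval /=; congr (_ * _).
    rewrite hornerD hornerN hornerMn hornerC hornerX mulr_natr.
    by [].
  pose G j := (g j ord0).[t].
  have Hsplit : \sum_j (t * (i == j)%:R - P i j) * G j = t * G i - \sum_j P i j * G j.
    rewrite (eq_bigr (fun j => t * (i == j)%:R * G j - P i j * G j)) => [|j _]; last by rewrite mulrBl.
    rewrite sumrB (bigD1 i) //= big1 ?addr0 ?eqxx ?mulr1 // => j ji.
    by rewrite eq_sym (negPf ji) mulr0 mul0r.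
  rewrite /hv /hp /= hornerZ.
  under eq_bigr do rewrite hornerZ.
  rewrite -H' Hsplit mulrBr mulr_sumr; congr (_ - _).
    by rewrite mulrCA.
  by apply: eq_bigr => j _; rewrite mulrCA.
have Hmin : forall t i0, (forall j, hv t i0 <= hv t j) ->
    s * p.[t] <= (t - \sum_j P i0 j) * hv t i0.
  move=> t i0 Hi0; rewrite -(Hid t i0) mulrBl mulr_suml lerD2l lerN2.
  by apply: ler_sum => j _; apply: ler_wpM2l.
pose Rb := r + \sum_i \sum_j P i j.
have Hrow : forall i, \sum_j P i j <= Rb - r.
  move=> i; rewrite /Rb [r + _]addrC addrK [X in _ <= X](bigD1 i) //= lerDl.
  by apply: sumr_ge0 => i' _; apply: sumr_ge0.
have rRb : r <= Rb.
  have := Hrow ord0; have := Pr ord0; lra.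
have argmin : forall t, exists i0, forall j, hv t i0 <= hv t j.
  move=> t; case: (@arg_minP _ _ _ ord0 xpredT (hv t) isT) => i0 _ H.
  by exists i0 => j; apply: H.
have HposRb : forall i, 0 < hv Rb i.
  move=> i; have [i0 Hi0] := argmin Rb.
  apply: lt_le_trans (Hi0 i); rewrite ltNge; apply/negP => Hle.
  have H1 := Hmin Rb i0 Hi0; have H2 := Hsp Rb rRb.
  have H3 : 0 <= Rb - \sum_j P i0 j by have := Hrow i0; have := r0; lra.
  have H4 : (Rb - \sum_j P i0 j) * hv Rb i0 <= 0 by apply: mulr_ge0_le0.
  lra.
pose Gp := \prod_i hp i.
have GRb : 0 < Gp.[Rb] by rewrite horner_prod; apply: prodr_gt0 => i _; exact: HposRb i.
have Gp0 : Gp != 0 by apply: contraTneq GRb => ->; rewrite horner0 ltxx.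
have Hin := prev_root_in Gp r Rb; rewrite (min_l rRb) in Hin.
have Hnr := @prev_noroot R Gp r Rb.
have Hnn : forall i, 0 <= hv (prev_root Gp r Rb) i.
  move=> i; rewrite leNgt; apply/negP => Hlt.
  have t0Rb : prev_root Gp r Rb <= Rb by rewrite (itvP Hin).
  have Hneg : (hp i).[prev_root Gp r Rb] * (hp i).[Rb] < 0 by rewrite pmulr_llt0 //; apply: HposRb.
  have [x Hx rx] := poly_ivtoo t0Rb Hneg.
  have : root Gp x.
    by rewrite /root horner_prod; apply/prodf_eq0; exists i.
  by apply/negP; apply: Hnr.
move: Hnn Hin; case: prev_rootP => [Gp0' | y _ Gy Hy _ | c _ Hc _] Hnn Hin.
- by rewrite Gp0' eqxx in Gp0.
- have : Gp.[y] == 0 by rewrite Gy.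
  rewrite horner_prod => /prodf_eq0 [i _ /eqP hi].
  have [i0 Hi0] := argmin y.
  have h00 : hv y i0 = 0.
    by apply/eqP; rewrite eq_le Hnn andbT; have := Hi0 i; rewrite /hv hi.
  have := Hmin y i0 Hi0; rewrite h00 mulr0.
  have ry : r <= y by rewrite (itvP Hin).
  have := Hsp y ry; lra.
- rewrite (min_l rRb) in Hc; subst c.
  have [i0 Hi0] := argmin r.
  have H1 := Hmin r i0 Hi0; have H2 := Hsp r (lexx r).
  have H4 : (r - \sum_j P i0 j) * hv r i0 <= 0.
    apply: mulr_le0_ge0 => //; have := Pr i0; lra.
  lra.
Qed.
Lemma sum_ind_card (R : pzSemiRingType) (T : finType) (b : pred T) :
  \sum_(w : T) ((b w)%:R : R) = (#|[set w | b w]|)%:R.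
Proof.
rewrite -sum1_card natr_sum [RHS]big_mkcond /=; apply: eq_bigr => w _.
by rewrite in_set; case: (b w).
Qed.

Lemma legal_facts (R : realFieldType) (eps delta : R) :
  legal_params eps delta -> [/\ 0 < eps, 0 < delta, eps < 1 & eps < delta].
Proof.
move=> [d0 [e0 ed]].
have d1 : 0 < delta + 1 by lra.
move: ed; rewrite ltr_pdivlMr // mulrDr mulr1 => ed.
have ed2 : 0 < eps * delta by apply: mulr_gt0.
have e1 : eps < 1.
  have : eps * (delta + 1) < 1 * (delta + 1) by rewrite mul1r mulrDr mulr1; lra.
  by rewrite ltr_pM2r.
split => //; lra.
Qed.

Lemma core_eq (R : rcfType) n m (c : 'I_n -> 'I_m) (Gh : rel 'I_m) (eps delta : R) :
  let f := fun i j : 'I_m => if (j == i) || Gh j i then 1 - eps else 1 + delta in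
  1%:M - ctln (composite_clique_graph c Gh) eps delta =
  eps%:M + (\matrix_(u, i) ((c u == i)%:R : R)) *m (\matrix_(i, w) f i (c w)).
Proof.
move=> f; apply/matrixP => u w; rewrite !mxE.
rewrite (bigD1 (c u)) //= big1 => [|i iu]; last by rewrite !mxE eq_sym (negPf iu) mul0r.
rewrite !mxE eqxx mul1r addr0 /f /composite_clique_graph.
case: (eqVneq u w) => [->|uw] /=; first by rewrite eqxx orTb /= (_ : eps *+ 1 = eps) //; lra.
by rewrite (_ : eps *+ 0 = 0) //; case: (_ || _); lra.
Qed.

Lemma core (R : rcfType) n k (c : 'I_n -> 'I_k.+2) (Gh : rel 'I_k.+2) (eps delta theta : R) :
  legal_params eps delta ->
  (forall i, (k.+2 <= 1 + 2 * #|[set w | ~~ ((c w == i) || Gh (c w) i)]|)%N) ->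
  ~ stable_motif (composite_clique_graph c Gh) eps delta theta.
Proof.
move=> /legal_facts [e0 d0 e1 ed] Hcnt [_ _ Hst].
pose f := fun i j : 'I_k.+2 => if (j == i) || Gh j i then 1 - eps else 1 + delta.
pose U := \matrix_(u, i) ((c u == i)%:R : R).
pose V := \matrix_(i, w) f i (c w).
have HA := @core_eq R n k.+2 c Gh eps delta.
rewrite -/f -/U -/V in HA.
pose C := V *m U + eps%:M.
have HstC : forall lam, eigenvalue (map_mx (real_complex R) C) lam -> 0 < complex.Re lam.
  move=> lam Hl; case: (eqVneq lam (real_complex R eps)) => [-> //|ne].
  apply: Hst; rewrite HA map_mxD map_scalar_mx map_mxM; apply: eigen_transfer ne.
  by rewrite -map_mxM -map_scalar_mx -map_mxD.
have f0 : forall i j, 0 <= f i j by move=> i j; rewrite /f; case: (_ || _); lra.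
have Hent : forall i j, C i j = \sum_w f i (c w) * (c w == j)%:R + eps * (i == j)%:R.
  move=> i j; rewrite /C !mxE; congr (_ + _); last by rewrite mulr_natr.
  by apply: eq_bigr => w _; rewrite !mxE.
have C0 : forall i j, 0 <= C i j.
  move=> i j; rewrite Hent; apply: addr_ge0.
    by apply: sumr_ge0 => w _; apply: mulr_ge0 => //; rewrite ler0n.
  by apply: mulr_ge0; [lra | rewrite ler0n].
have Hrow : forall i, \sum_j C i j = \sum_w f i (c w) + eps.
  move=> i; under eq_bigr do rewrite Hent.
  rewrite big_split /= exchange_big /=; congr (_ + _).
    apply: eq_bigr => w _; rewrite (bigD1 (c w)) //= eqxx mulr1 big1 ?addr0 // => j jw.
    by rewrite eq_sym (negPf jw) mulr0.
  rewrite (bigD1 i) //= eqxx mulr1 big1 ?addr0 // => j ji.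
  by rewrite eq_sym (negPf ji) mulr0.
have sumc : forall x : R, \sum_(w < n) x = n%:R * x.
  by move=> x; rewrite sumr_const card_ord mulr_natl.
have Htr : \tr C = n%:R * (1 - eps) + k.+2%:R * eps.
  rewrite /mxtrace; under eq_bigr do rewrite Hent eqxx mulr1.
  rewrite big_split /= exchange_big /= sumr_const card_ord.
  congr (_ + _); last by rewrite mulr_natl.
  rewrite -(sumc (1 - eps)); apply: eq_bigr => w _.
  rewrite (bigD1 (c w)) //= eqxx mulr1 big1 ?addr0 => [|j jw]; last first.
    by rewrite eq_sym (negPf jw) mulr0.
  by rewrite /f eqxx.
have Hfsum : forall i, \sum_w f i (c w) =
    n%:R * (1 - eps) + (delta + eps) * (#|[set w | ~~ ((c w == i) || Gh (c w) i)]|)%:R.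
  move=> i; rewrite -sum_ind_card mulr_sumr -(sumc (1 - eps)).
  rewrite -big_split /=; apply: eq_bigr => w _; rewrite /f.
  by case: (_ || _) => /=; rewrite ?mulr0 ?mulr1; lra.
have Htr_le : forall i, \tr C <= \sum_j C i j.
  move=> i; rewrite Hrow Hfsum Htr.
  have := Hcnt i; set e := #|_| => He.
  have He' : (k.+2)%:R <= 1 + 2 * (e%:R : R).
    by rewrite -(ler_nat R) natrD natrM in He.
  have e0' : 0 <= (e%:R : R) by rewrite ler0n.
  have H1 : (k.+2)%:R * eps <= (1 + 2 * e%:R) * eps by rewrite ler_pM2r.
  have H2 : eps * e%:R <= delta * e%:R by apply: ler_wpM2r => //; lra.
  nra.
have trpos : 0 < \tr C.
  rewrite Htr; have : 0 <= (n%:R : R) by rewrite ler0n.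
  have : 0 < (k.+2%:R : R) by rewrite ltr0n.
  nra.
have [t rt troot] := @PF R k.+1 C (\tr C) trpos C0 Htr_le.
have := @trace_root R k C t troot HstC.
rewrite ltNge rt //.
Qed.

Theorem theorem14 (R : rcfType) (n m : nat) (c : 'I_n -> 'I_m) (Gh : rel 'I_m) :
  (2 <= m)%N ->
  (forall i : 'I_m, exists v : 'I_n, c v = i) ->
  simple_digraph Gh ->
  ((2 * max_indeg (composite_clique_graph c Gh) + m + 1 <= 2 * n)%N ->
     forall eps delta theta : R, legal_params eps delta -> 0 < theta ->
       ~ stable_motif (composite_clique_graph c Gh) eps delta theta)
  /\
  ((2 * max_indeg Gh < m)%N ->
     forall eps delta theta : R, legal_params eps delta -> 0 < theta ->
       ~ stable_motif (composite_clique_graph c Gh) eps delta theta).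
Proof.
case: m c Gh => [|[|k]] c Gh // _ Hsurj Hsimp.
have [r Hr] := fin_all_exists Hsurj.
have Hcard : forall i, (#|[set w | ~~ ((c w == i) || Gh (c w) i)]|
                        + #|[set w | (c w == i) || Gh (c w) i]| = n)%N.
  move=> i; rewrite -[RHS](card_ord n) -(cardsC [set w | (c w == i) || Gh (c w) i]) addnC.
  congr (_ + _)%N; apply: eq_card => w; by rewrite !inE.
split.
- move=> H eps delta theta Hl _; apply: core Hl _ => i.
  have Hind : (indeg (composite_clique_graph c Gh) (r i) <= max_indeg (composite_clique_graph c Gh))%N.
    exact: leq_bigmax.
  have HS : (#|[set w | (c w == i) || Gh (c w) i]| = 1 + indeg (composite_clique_graph c Gh) (r i))%N.
    rewrite (cardsD1 (r i)) inE Hr eqxx /=; congr (_ + _)%N.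
    apply: eq_card => u; rewrite !inE /composite_clique_graph Hr.
    by [].
  have := Hcard i; lia.
- move=> H eps delta theta Hl _; apply: core Hl _ => i.
  have Hind : (indeg Gh i <= max_indeg Gh)%N by exact: leq_bigmax.
  have Hinj : injective r := can_inj Hr.
  have Hsub : r @: [set j | ~~ ((j == i) || Gh j i)] \subset [set w | ~~ ((c w == i) || Gh (c w) i)].
    by apply/subsetP => w /imsetP [j jT ->]; rewrite inE Hr; rewrite inE in jT.
  have H1 := subset_leq_card Hsub; rewrite card_imset // in H1.
  have H2 : (#|[set j | ~~ ((j == i) || Gh j i)]| + #|[set j | (j == i) || Gh j i]| = k.+2)%N.
    rewrite -[RHS](card_ord k.+2) -(cardsC [set j | (j == i) || Gh j i]) addnC.
    congr (_ + _)%N; apply: eq_card => w; by rewrite !inE.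
  have H3 : (#|[set j | (j == i) || Gh j i]| = 1 + indeg Gh i)%N.
    have -> : [set j | (j == i) || Gh j i] = i |: [set j | Gh j i].
      by apply/setP => j; rewrite !inE.
    by rewrite cardsU1 inE (negPf (Hsimp i)).
  have := Hcard i; lia.
Qed.
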